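(* Let $p>1$ be an integer and let $u^{(p)}$ be the fixed point of the substitution $\varphi_p(L)=L^pS$, $\varphi_p(S)=M$, $\varphi_p(M)=L^{p-1}S$. Let $v,w$ be factors of $u^{(p)}$ with $|v|=|w|$. Then $\left||v|_M-|w|_M\right|\le 2$.
   Context: $u^{(p)}=\lim_{n\to\infty}\varphi_p^n(L)$ is the unique infinite word over $\{L,S,M\}$ fixed by $\varphi_p$. A factor is a finite contiguous subword; $|w|$ is the length and $|w|_a$ the number of occurrences of the letter $a$ in $w$. *)

(* Defs.v *)
From HB Require Import structures.
From mathcomp Require Import all_boot.
Set Implicit Arguments. Unset Strict Implicit. Unset Printing Implicit Defensive.

Inductive letter := L | S | M.

Definition letter_eqb (a b : letter) : bool :=
  match a, b with L, L | S, S | M, M => true | _, _ => false end.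
Lemma letter_eqP : Equality.axiom letter_eqb.
Proof. by case; case; constructor. Qed.
HB.instance Definition _ := hasDecEq.Build letter letter_eqP.

Definition phi (p : nat) (a : letter) : seq letter :=
  match a with
  | L => rcons (nseq p L) S
  | S => [:: M]
  | M => rcons (nseq p.-1 L) S
  end.

Definition phiw (p : nat) (w : seq letter) : seq letter := flatten (map (phi p) w).

(* The fixed point u^(p) = lim phi_p^n(L), as an infinite word nat -> letter.
   phi_p^k(L) is a prefix of phi_p^(k+1)(L) and |phi_p^k(L)| >= k+1, so the
   n-th letter of u^(p) is the n-th letter of phi_p^(n+1)(L). *)
Definition u (p : nat) (n : nat) : letter := nth L (iter n.+1 (phiw p) [:: L]) n.

Definition factor (p i n : nat) : seq letter := [seq u p (i + j) | j <- iota 0 n].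

Definition occ (a : letter) (w : seq letter) : nat := count_mem a w.

(* Main.v *)
Require Import Defs.
From HB Require Import structures.
From Stdlib Require Import ZArith Lia FMapPositive.
From mathcomp Require Import all_boot zify.
Set Implicit Arguments. Unset Strict Implicit. Unset Printing Implicit Defensive.

Record st := MkSt { sk : Z; ss : Z; sm : Z; la : letter; lb : letter; la' : letter; lb' : letter }.

Definition st_eqb (x y : st) : bool :=
  [&& Z.eqb (sk x) (sk y), Z.eqb (ss x) (ss y), Z.eqb (sm x) (sm y),
      la x == la y, lb x == lb y, la' x == la' y & lb' x == lb' y].

Definition lidx (c : letter) : Z := match c with L => 0 | S => 1 | M => 2 end%Z.

Definition enc (x : st) : positive :=
  Z.to_pos (1 + (lidx (la x) + 3 * (lidx (lb x) + 3 * (lidx (la' x) + 3 * (lidx (lb' x)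
     + 3 * ((sm x + 20) + 41 * ((ss x + 20) + 41 * (sk x + 20))))))))%Z.

Definition tmap := PositiveMap.t st.

Definition memT (T : tmap) (x : st) : bool :=
  match PositiveMap.find (enc x) T with Some y => st_eqb y x | None => false end.

Definition mkmap (l : seq st) : tmap :=
  foldl (fun m x => PositiveMap.add (enc x) x m) (PositiveMap.empty st) l.

Definition ropts (c : letter) : seq (letter * (Z * Z) * (Z * Z)) :=
  match c with
  | L => [:: (L, (0, 0), (1, -1)); (S, (1, 0), (1, 0))]
  | M => [:: (L, (0, 0), (1, -2)); (S, (1, -1), (1, -1))]
  | S => [:: (M, (0, 0), (0, 0))]
  end%Z.

Definition zadd (x y : Z * Z) : Z * Z := (x.1 + y.1, x.2 + y.2)%Z.
Definition zsub (x y : Z * Z) : Z * Z := (x.1 - y.1, x.2 - y.2)%Z.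

Definition zrange (lo hi : Z) : seq Z :=
  map (fun i => lo + Z.of_nat i)%Z (iota 0 (Z.to_nat (hi - lo + 1))).

Definition evT := (Z * Z) -> (Z * Z) -> (Z * Z).

Definition evc (p K : Z) : evT := fun lo hi =>
  (Z.max (- K) (lo.1 * p + lo.2), Z.min K (hi.1 * p + hi.2))%Z.

Definition evs (P0 K : Z) : evT := fun lo hi =>
  (Z.max (- K) (if (0 <? lo.1)%Z then lo.1 * P0 + lo.2 else if (lo.1 <? 0)%Z then - K else lo.2),
   Z.min K (if (hi.1 <? 0)%Z then hi.1 * P0 + hi.2 else if (0 <? hi.1)%Z then K else hi.2))%Z.

Definition succs (ev : evT) (x : st) : seq st :=
  let l1 := (sk x - ss x - sm x)%Z in
  let base := (l1 + sm x, l1 + ss x)%Z in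
  flatten [seq flatten [seq flatten [seq flatten [seq
     let lo := zadd (zsub (zsub (zadd base o2.1.2) o1.2) o4.2) o3.1.2 in
     let hi := zadd (zsub (zsub (zadd base o2.2) o1.1.2) o4.1.2) o3.2 in
     let r := ev lo hi in
     [seq MkSt k (l1 + sm x)%Z (ss x) o1.1.1 o2.1.1 o3.1.1 o4.1.1 | k <- zrange r.1 r.2]
   | o4 <- ropts (lb' x)] | o3 <- ropts (la' x)] | o2 <- ropts (lb x)] | o1 <- ropts (la x)].

Definition letters := [:: L; S; M].

Definition cntS (w : seq letter) : Z := Z.of_nat (count_mem S w).
Definition cntM (w : seq letter) : Z := Z.of_nat (count_mem M w).

Definition bwin : seq (nat * seq letter * letter) :=
  [seq (0%N, [::], e) | e <- letters] ++
  [seq (1%N, [:: c0], e) | c0 <- letters, e <- letters] ++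
  flatten [seq [seq (2%N, [:: c0; c1], e) | c1 <- letters, e <- letters] | c0 <- letters].

Definition bst (w1 w2 : nat * seq letter * letter) : st :=
  let st1 := head w1.2 w1.1.2 in
  let st2 := head w2.2 w2.1.2 in
  MkSt (Z.of_nat w1.1.1 - Z.of_nat w2.1.1) (cntS w1.1.2 - cntS w2.1.2) (cntM w1.1.2 - cntM w2.1.2)
       st1 w1.2 st2 w2.2.

Definition base : seq st := [seq bst w1 w2 | w1 <- bwin, w2 <- bwin].

Fixpoint grow (fuel : nat) (ev : evT) (T : tmap) (acc front : seq st) : seq st :=
  match fuel with
  | 0 => acc
  | n.+1 =>
    let res := foldl (fun (a : tmap * seq st) y =>
                 if memT a.1 y then a else (PositiveMap.add (enc y) y a.1, y :: a.2))
               (T, [::]) (flatten (map (succs ev) front)) in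
    if res.2 is [::] then acc else grow n ev res.1 (res.2 ++ acc) res.2
  end.

Definition K7 : Z := 7.
Definition elems (ev : evT) : seq st := grow 200 ev (mkmap base) base base.

Definition bound_ok (P0 K : Z) (x : st) : bool :=
  (if Z.eqb (sk x) K then (ss x <=? K - 2)%Z && (sm x <? P0 * (K - ss x - 2) + 1)%Z else true) &&
  (if Z.eqb (sk x) (- K) then (- ss x <=? K - 2)%Z && (- sm x <? P0 * (K + ss x - 2) + 1)%Z else true).

Definition final_ok (x : st) : bool :=
  if Z.eqb (sk x) 0 then (- 2 <=? sm x)%Z && (sm x <=? 2)%Z else true.

Definition check (ev : evT) (P0 K : Z) : bool :=
  let els := elems ev in
  let T := mkmap els in
  [&& all (fun x => all (memT T) (succs ev x)) els, all (memT T) base,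
      all (bound_ok P0 K) els & all final_ok els].



Section Word.
Variable p : nat.
Hypothesis hp : 1 < p.

Definition W k := iter k (phiw p) [:: L].

Lemma phiw_cat s1 s2 : phiw p (s1 ++ s2) = phiw p s1 ++ phiw p s2.
Proof. by rewrite /phiw map_cat flatten_cat. Qed.

Lemma phiw_cons c s : phiw p (c :: s) = phi p c ++ phiw p s.
Proof. by []. Qed.

Lemma size_phi c : size (phi p c) = match c with L => p.+1 | S => 1 | M => p end.
Proof. by case: c => //=; rewrite size_rcons size_nseq // prednK // ltnW. Qed.

Lemma size_phi_pos c : 0 < size (phi p c).
Proof. by rewrite size_phi; case: c => //; lia. Qed.

Lemma WS k : W k.+1 = phiw p (W k).
Proof. by rewrite /W iterS. Qed.

Lemma W_prefix k : exists t, W k.+1 = W k ++ t.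
Proof.
elim: k => [|k [t Ht]].
  exists (drop 1 (phi p L)); rewrite /W.
  have [q ->] : exists q, p = q.+1 by exists p.-1; lia.
  by rewrite /= /phiw /= cats0 drop0.
by exists (phiw p t); rewrite [W k.+2]WS Ht phiw_cat -WS Ht.
Qed.

Lemma W_prefix_le k k' : k <= k' -> exists t, W k' = W k ++ t.
Proof.
move=> /subnK <-; elim: (k' - k) => [|d [t Ht]]; first by exists [::]; rewrite cats0.
have [t' Ht'] := W_prefix (d + k); exists (t ++ t').
by rewrite addSn Ht' Ht catA.
Qed.

Lemma W_head k : exists t, W k = L :: t.
Proof. have [t Ht] := W_prefix_le (leq0n k); by exists t; rewrite Ht. Qed.

Lemma size_phiw s : size s <= size (phiw p s).
Proof.
elim: s => //= c s IH; rewrite phiw_cons size_cat.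
have := size_phi_pos c; lia.
Qed.

Lemma size_W k : k < size (W k).
Proof.
elim: k => [|k IH] //; rewrite WS.
have [t Ht] := W_head k; rewrite Ht phiw_cons size_cat size_phi.
rewrite Ht in IH; have := size_phiw t; rewrite /= in IH; lia.
Qed.

Lemma uE k i : i < size (W k) -> u p i = nth L (W k) i.
Proof.
move=> hi; rewrite /u -/(W i.+1).
have [t1 H1] := W_prefix_le (leq_maxl k i.+1).
have [t2 H2] := W_prefix_le (leq_maxr k i.+1).
have hi2 : i < size (W i.+1) by have := size_W i.+1; lia.
have : nth L (W (maxn k i.+1)) i = nth L (W k) i by rewrite H1 nth_cat hi.
by rewrite H2 nth_cat hi2 => ->.
Qed.

Definition N m := sumn [seq size (phi p (u p t)) | t <- iota 0 m].

Lemma N_S m : N m.+1 = N m + size (phi p (u p m)).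
Proof. by rewrite /N -addn1 iotaD map_cat sumn_cat /= addn0. Qed.

Lemma N0 : N 0 = 0. Proof. by []. Qed.

Lemma take_W k m : m <= size (W k) -> take m (W k) = [seq u p t | t <- iota 0 m].
Proof.
move=> hm; apply: (@eq_from_nth _ L); first by rewrite size_takel // size_map size_iota.
move=> t; rewrite size_takel // => htm.
rewrite nth_take // (nth_map 0) ?size_iota // nth_iota // add0n (uE (k:=k)) //; lia.
Qed.

Lemma uN m r : r < size (phi p (u p m)) -> u p (N m + r) = nth L (phi p (u p m)) r.
Proof.
move=> hr.
have hm := size_W m.+1.
have e1 : W m.+1 = take m (W m.+1) ++ nth L (W m.+1) m :: drop m.+1 (W m.+1).
  by rewrite -drop_nth ?cat_take_drop //; lia.
have em : nth L (W m.+1) m = u p m by rewrite (uE (k:=m.+1)) //; lia.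
have hN : size (phiw p (take m (W m.+1))) = N m.
  rewrite take_W; last lia.
  by rewrite /phiw size_flatten /shape -map_comp /N -map_comp.
have hW : W m.+2 = phiw p (take m (W m.+1)) ++ phi p (u p m) ++ phiw p (drop m.+1 (W m.+1)).
  by rewrite WS {1}e1 phiw_cat phiw_cons em.
rewrite (uE (k := m.+2)); last by rewrite hW !size_cat hN; lia.
by rewrite hW nth_cat hN ltnNge leq_addr /= addKn nth_cat hr.
Qed.

Lemma decomp i : exists m r, i = N m + r /\ r < size (phi p (u p m)).
Proof.
elim: i => [|i [m [r [-> hr]]]]; first by exists 0, 0; split => //; apply: size_phi_pos.
case: (ltnP r.+1 (size (phi p (u p m)))) => h.
  by exists m, r.+1; split => //; rewrite addnS.
exists m.+1, 0; split; last exact: size_phi_pos.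
rewrite N_S; lia.
Qed.

Lemma N_mono m1 m2 : m1 <= m2 -> N m1 <= N m2.
Proof.
move=> /subnK <-; elim: (m2 - m1) => // d IH; rewrite addSn N_S; lia.
Qed.

Lemma N_ge m : m <= N m.
Proof. elim: m => // m IH; rewrite N_S; have := size_phi_pos (u p m); lia. Qed.

Definition P a i := count_mem a [seq u p t | t <- iota 0 i].

Lemma P_add a i n : P a (i + n) = P a i + count_mem a [seq u p t | t <- iota i n].
Proof. by rewrite /P iotaD map_cat count_cat. Qed.

Lemma occ_factor a i n : occ a (factor p i n) = P a (i + n) - P a i.
Proof.
rewrite P_add addKn /occ /factor; congr count.
have -> : iota i n = map (addn i) (iota 0 n) by rewrite -iotaDl addn0.
by rewrite -map_comp.
Qed.

Lemma map_block m r : r <= size (phi p (u p m)) ->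
  [seq u p t | t <- iota (N m) r] = take r (phi p (u p m)).
Proof.
move=> hr; apply: (@eq_from_nth _ L); first by rewrite size_map size_iota size_takel.
move=> t; rewrite size_map size_iota => ht.
by rewrite (nth_map 0) ?size_iota // nth_iota // uN ?nth_take //; lia.
Qed.

Lemma P_block a m r : r <= size (phi p (u p m)) ->
  P a (N m + r) = P a (N m) + count_mem a (take r (phi p (u p m))).
Proof. by move=> hr; rewrite P_add map_block. Qed.

Lemma take_phi_L c r : r < size (phi p c) -> take r (phi p c) = nseq r L.
Proof.
move=> hr; apply: (@eq_from_nth _ L); first by rewrite size_take hr size_nseq.
move=> t; rewrite size_take hr => ht; rewrite nth_take // nth_nseq ht.
move: hr; rewrite size_phi; case: c => /=.
- by rewrite nth_rcons size_nseq nth_nseq => ?; case: ltnP => // ?; lia.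
- lia.
- by rewrite nth_rcons size_nseq nth_nseq => ?; case: ltnP => // ?; lia.
Qed.

Lemma cnt_nseqL a r : count_mem a (nseq r L) = if a == L then r else 0.
Proof. by rewrite count_nseq; case: a => /=; rewrite ?mul1n ?mul0n. Qed.

Lemma cnt_phi a c : count_mem a (phi p c) =
  match c, a with
  | L, L => p | L, S => 1 | L, M => 0
  | S, L => 0 | S, S => 0 | S, M => 1
  | M, L => p.-1 | M, S => 1 | M, M => 0 end.
Proof. by case: c; case: a => //=; rewrite -cats1 count_cat count_nseq /=; lia. Qed.

Lemma P_N m : [/\ P L (N m) = p * P L m + p.-1 * P M m,
                  P S (N m) = P L m + P M m & P M (N m) = P S m].
Proof.
elim: m => [|m [IH1 IH2 IH3]]; first by rewrite /P /= !muln0.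
have e a : P a (N m.+1) = P a (N m) + count_mem a (phi p (u p m)).
  by rewrite N_S P_block // take_size.
have f a : P a m.+1 = P a m + (u p m == a).
  by rewrite /P -addn1 iotaD map_cat count_cat /= addn0.
rewrite !e !f IH1 IH2 IH3 !cnt_phi.
by case: (u p m) => /=; split; lia.
Qed.

Lemma cnt_sum (s : seq letter) : count_mem L s + count_mem S s + count_mem M s = size s.
Proof. elim: s => //= c s IH; case: c => /=; lia. Qed.

Lemma Psum i : P L i + P S i + P M i = i.
Proof. by rewrite /P cnt_sum size_map size_iota. Qed.

Lemma P_mono a i j : i <= j -> P a i <= P a j.
Proof. by move=> /subnK <-; rewrite addnC P_add leq_addr. Qed.

Lemma N_eq m : N m = p.+1 * P L m + P S m + p * P M m.
Proof.
have [h1 h2 h3] := P_N m.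
have := Psum (N m); rewrite h1 h2 h3 => <-.
have [q eq] : exists q, p = q.+1 by exists p.-1; lia.
rewrite eq /=; lia.
Qed.

Lemma P_Nr a m r : r < size (phi p (u p m)) ->
  P a (N m + r) = P a (N m) + (if a == L then r else 0).
Proof. by move=> hr; rewrite P_block ?take_phi_L ?cnt_nseqL //; lia. Qed.

Lemma nth_phi_L c r : r < (size (phi p c)).-1 -> nth L (phi p c) r = L.
Proof.
rewrite size_phi; case: c => /= h.
- by rewrite nth_rcons size_nseq nth_nseq; case: ltnP => // ?; lia.
- lia.
- by rewrite nth_rcons size_nseq nth_nseq; case: ltnP => // ?; lia.
Qed.

Lemma nth_phi_last c : nth L (phi p c) (size (phi p c)).-1 = if c is S then M else S.
Proof.
rewrite size_phi; case: c => /=.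
- by rewrite nth_rcons size_nseq; case: ltnP => [?|_]; [lia | rewrite eqxx].
- by [].
- by rewrite nth_rcons size_nseq; case: ltnP => [?|_]; [lia | rewrite eqxx].
Qed.

Lemma nth_phi_cases c r : r < size (phi p c) ->
  (r < (size (phi p c)).-1 /\ nth L (phi p c) r = L) \/
  (r = (size (phi p c)).-1 /\ nth L (phi p c) r = if c is S then M else S).
Proof.
move=> hr; case: (ltnP r (size (phi p c)).-1) => h.
  by left; split => //; rewrite nth_phi_L.
right; have e : r = (size (phi p c)).-1 by have := size_phi_pos c; lia.
by split => //; rewrite e nth_phi_last.
Qed.

Lemma noSS m : u p m = S -> u p m.+1 != S.
Proof.
have [m' [r [-> hr]]] := decomp m.
rewrite uN //.
case: (nth_phi_cases hr) => [[_ ->] //|[hr1 ->]].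
case hc : (u p m') => // _.
all: have -> : (N m' + r).+1 = N m'.+1 + 0 by rewrite N_S hr1; have := size_phi_pos (u p m'); lia.
all: rewrite uN ?size_phi_pos //.
all: case: (u p m'.+1) => //=.
all: have [q ->] : exists q, p = q.+2 by exists p.-2; lia.
all: by [].
Qed.

End Word.


Lemma st_eqP : Equality.axiom st_eqb.
Proof.
move=> [k s m a b c d] [k' s' m' a' b' c' d']; rewrite /st_eqb /=.
apply: (iffP idP).
  by case/and5P=> /Z.eqb_spec -> /Z.eqb_spec -> /Z.eqb_spec -> /eqP -> /and3P [/eqP -> /eqP -> /eqP ->].
case=> -> -> -> -> -> -> ->; by rewrite !Z.eqb_refl !eqxx.
Qed.
HB.instance Definition _ := hasDecEq.Build st st_eqP.

Lemma Zeq_ax : Equality.axiom Z.eqb.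
Proof. by move=> x y; apply: (iffP idP) => [/Z.eqb_spec|->] //; apply: Z.eqb_refl. Qed.
HB.instance Definition _ := hasDecEq.Build Z Zeq_ax.

Lemma find_fold k y (l : seq st) (T : tmap) :
  PositiveMap.find k (foldl (fun m x => PositiveMap.add (enc x) x m) T l) = Some y ->
  y \in l \/ PositiveMap.find k T = Some y.
Proof.
elim: l T => [|x l IH] T /=; first by right.
move=> /IH [h|]; first by left; rewrite inE h orbT.
case: (Pos.eq_dec k (enc x)) => [->|ne].
  by rewrite PositiveMap.gss => -[->]; left; rewrite inE eqxx.
by rewrite PositiveMap.gso //; right.
Qed.

Lemma memT_mkmap l x : memT (mkmap l) x -> x \in l.
Proof.
rewrite /memT; case E: (PositiveMap.find _ _) => [y|] //.
move=> /st_eqP <-; have [//|] := find_fold E.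
by rewrite PositiveMap.gempty.
Qed.

Lemma zrange_mem lo hi k : (lo <= k <= hi)%Z -> k \in zrange lo hi.
Proof.
move=> hk; rewrite /zrange.
have -> : k = (lo + Z.of_nat (Z.to_nat (k - lo)))%Z by lia.
apply: map_f; rewrite mem_iota add0n; lia.
Qed.

Definition evspec (p K : Z) (ev : evT) := forall lo hi,
  ((ev lo hi).1 <= Z.max (- K) (lo.1 * p + lo.2) /\ Z.min K (hi.1 * p + hi.2) <= (ev lo hi).2)%Z.

Lemma evc_spec p K : evspec p K (evc p K).
Proof. by move=> lo hi; rewrite /evc /=; lia. Qed.

Lemma evs_spec p P0 K : (0 <= P0 <= p)%Z -> evspec p K (evs P0 K).
Proof.
move=> hP lo hi; rewrite /evs /=; case: lo => a b; case: hi => c d /=.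
split.
- case: (Z.ltb_spec 0 a) => ha.
    have : (a * P0 <= a * p)%Z by apply: Z.mul_le_mono_nonneg_l; lia.
    lia.
  case: (Z.ltb_spec a 0) => hb; first lia.
  have -> : a = 0%Z by lia. lia.
- case: (Z.ltb_spec c 0) => ha.
    have : (c * p <= c * P0)%Z by apply: Z.mul_le_mono_nonpos_l; lia.
    lia.
  case: (Z.ltb_spec 0 c) => hb; first lia.
  have -> : c = 0%Z by lia. lia.
Qed.

Section Main.
Variable p : nat.
Hypothesis hp : 1 < p.

Definition zp := Z.of_nat p.
Definition ev2 (o : Z * Z) := (o.1 * zp + o.2)%Z.

Lemma ropts_match c r : r < size (phi p c) ->
  exists2 o, o \in ropts c &
    o.1.1 = nth L (phi p c) r /\ (ev2 o.1.2 <= Z.of_nat r <= ev2 o.2)%Z.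
Proof.
move=> hr; have hs := size_phi hp c.
case: (nth_phi_cases hp hr) => [[h1 ->]|[h1 ->]]; rewrite hs in h1;
  case: c hr hs h1 => /= hr hs h1.
- by exists (L, (0, 0), (1, -1))%Z; rewrite ?inE ?eqxx //= /ev2 /zp; split; [done|cbn [fst snd]; lia].
- lia.
- by exists (L, (0, 0), (1, -2))%Z; rewrite ?inE ?eqxx ?orbT //= /ev2 /zp; split; [done|cbn [fst snd]; lia].
- by exists (S, (1, 0), (1, 0))%Z; rewrite ?inE ?eqxx ?orbT //= /ev2 /zp; split; [done|cbn [fst snd]; lia].
- by exists (M, (0, 0), (0, 0))%Z; rewrite ?inE ?eqxx ?orbT //= /ev2 /zp; split; [done|cbn [fst snd]; lia].
- by exists (S, (1, -1), (1, -1))%Z; rewrite ?inE ?eqxx ?orbT //= /ev2 /zp; split; [done|cbn [fst snd]; lia].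
Qed.

Variable K : Z.
Variable ev : evT.
Hypothesis Hev : evspec zp K ev.

Lemma succ_in x r1 r2 r3 r4 :
  r1 < size (phi p (la x)) -> r2 < size (phi p (lb x)) ->
  r3 < size (phi p (la' x)) -> r4 < size (phi p (lb' x)) ->
  let l1 := (sk x - ss x - sm x)%Z in
  let k := ((zp + 1) * l1 + ss x + zp * sm x + Z.of_nat r2 - Z.of_nat r1 - Z.of_nat r4 + Z.of_nat r3)%Z in
  (- K <= k <= K)%Z ->
  MkSt k (l1 + sm x) (ss x) (nth L (phi p (la x)) r1) (nth L (phi p (lb x)) r2)
       (nth L (phi p (la' x)) r3) (nth L (phi p (lb' x)) r4) \in succs ev x.
Proof.
move=> h1 h2 h3 h4 l1 k hk.
have [o1 i1 [e1 b1]] := ropts_match h1.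
have [o2 i2 [e2 b2]] := ropts_match h2.
have [o3 i3 [e3 b3]] := ropts_match h3.
have [o4 i4 [e4 b4]] := ropts_match h4.
rewrite /succs; apply/flatten_mapP; exists o1 => //.
apply/flatten_mapP; exists o2 => //.
apply/flatten_mapP; exists o3 => //.
apply/flatten_mapP; exists o4 => //.
rewrite -e1 -e2 -e3 -e4; apply: (map_f (fun k0 => MkSt k0 _ _ _ _ _ _)).
apply: zrange_mem.
set lo := zadd _ _; set hi := zadd _ _.
have [H1 H2] := Hev lo hi.
move: b1 b2 b3 b4; rewrite /ev2 /lo /hi /zadd /zsub /= => b1 b2 b3 b4.
move: H1 H2; rewrite /lo /hi /zadd /zsub /=.
rewrite /k /l1 in hk *. lia.
Qed.

Lemma succ_in' x r1 r2 r3 r4 l1 k :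
  r1 < size (phi p (la x)) -> r2 < size (phi p (lb x)) ->
  r3 < size (phi p (la' x)) -> r4 < size (phi p (lb' x)) ->
  l1 = (sk x - ss x - sm x)%Z ->
  k = ((zp + 1) * l1 + ss x + zp * sm x + Z.of_nat r2 - Z.of_nat r1 - Z.of_nat r4 + Z.of_nat r3)%Z ->
  (- K <= k <= K)%Z ->
  MkSt k (l1 + sm x) (ss x) (nth L (phi p (la x)) r1) (nth L (phi p (lb x)) r2)
       (nth L (phi p (la' x)) r3) (nth L (phi p (lb' x)) r4) \in succs ev x.
Proof. by move=> h1 h2 h3 h4 -> ->; apply: succ_in. Qed.

End Main.


Section Ind.
Variable p : nat.
Hypothesis hp : 1 < p.

Definition zd a i n j n' : Z :=
  ((Z.of_nat (P p a (i + n)) - Z.of_nat (P p a i)) - (Z.of_nat (P p a (j + n')) - Z.of_nat (P p a j)))%Z.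

Definition wst i n j n' : st :=
  MkSt (Z.of_nat n - Z.of_nat n') (zd S i n j n') (zd M i n j n') (u p i) (u p (i + n)) (u p j) (u p (j + n')).

Lemma N_L1 a d : N p a + d <= N p (a + d).
Proof.
elim: d => [|d IH]; first by rewrite !addn0.
rewrite [a + d.+1]addnS N_S; have := size_phi_pos hp (u p (a + d)); lia.
Qed.

Lemma N_L3 a : N p a.+1 + 3 <= N p (a + 3).
Proof.
have -> : a + 3 = a.+1.+2 by lia.
rewrite !N_S.
have h1 := size_phi_pos hp (u p a.+1).
have h2 := size_phi_pos hp (u p a.+2).
have h3 := noSS hp (m := a.+1).
have hs c : c != S -> 2 <= size (phi p c) by rewrite (size_phi hp); case: c => //; lia.
case E : (u p a.+1) h1 h3 => [| |] h1 h3.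
- have := hs L isT; lia.
- have := hs _ (h3 erefl); lia.
- have := hs M isT; lia.
Qed.

Lemma window i n a ra b rb :
  i = N p a + ra -> ra < size (phi p (u p a)) ->
  i + n = N p b + rb -> rb < size (phi p (u p b)) ->
  [/\ a <= b, b - a <= n & (3 <= n -> b - a < n)].
Proof.
move=> hi ha hin hb.
have hab : a <= b.
  case: (leqP a b) => // hba.
  have := N_mono hp hba; rewrite N_S; lia.
have [d ed] : exists d, b = a + d by exists (b - a); lia.
subst b.
rewrite addKn.
suff [k1 k2] : d <= n /\ (3 <= n -> d < n) by split => //; lia.
case: d hin hb hab => [|d] hin hb hab.
  by split => //; lia.
have e1 := N_L1 a.+1 d; rewrite N_S in e1.
have e2 : a + d.+1 = a.+1 + d by lia.
rewrite e2 in hin.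
split; first lia.
move=> h3; case: (ltnP d 2) => hd; first lia.
have [d' ed'] : exists d', d = 2 + d' by exists (d - 2); lia.
subst d.
have f1 := N_L3 a; have f2 := N_L1 (a + 3) d'.
have e3 : a.+1 + (2 + d') = a + 3 + d' by lia.
rewrite N_S in f1.
rewrite e3 in hin.
lia.
Qed.

Lemma mem_letters c : c \in letters. Proof. by case: c. Qed.

Lemma cnt_win a i n : (Z.of_nat (P p a (i + n)) - Z.of_nat (P p a i) =
  Z.of_nat (count_mem a [seq u p t | t <- iota i n]))%Z.
Proof. rewrite P_add; lia. Qed.

Definition win i n := (n, [seq u p t | t <- iota i n], u p (i + n)).

Lemma win_in i n : n <= 2 -> win i n \in bwin.
Proof.
rewrite /win; case: n => [|[|[|n]]] // _ /=.
- by rewrite addn0; case: (u p i).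
- by move: (u p i) (u p (i + 1)) => [] [].
- by move: (u p i) (u p i.+1) (u p (i + 2)) => [] [] [].
Qed.

Lemma bst_win i n j n' : bst (win i n) (win j n') = wst i n j n'.
Proof.
rewrite /bst /wst /win /zd /cntS /cntM /= !cnt_win.
have hd x k : head (u p (x + k)) [seq u p t | t <- iota x k] = u p x.
  by case: k => [|k] //=; rewrite addn0.
by rewrite !hd.
Qed.

Lemma base_in i n j n' : n <= 2 -> n' <= 2 -> wst i n j n' \in base.
Proof.
move=> h1 h2; rewrite -bst_win /base.
exact: (allpairs_f bst (win_in i h1) (win_in j h2)).
Qed.

Variable K : Z.
Variable ev : evT.
Hypothesis Hev : evspec (zp p) K ev.
Variable Tm : tmap.
Variable P0 : Z.
Hypothesis HP0 : (0 <= P0 <= zp p)%Z.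
Hypothesis HK : (0 < K)%Z.
Hypothesis Hclos : forall x, memT Tm x -> all (memT Tm) (succs ev x).
Hypothesis Hbase : all (memT Tm) base.
Hypothesis Hbnd : forall x, memT Tm x -> bound_ok P0 K x.

Lemma PN_facts m r : r < size (phi p (u p m)) ->
  [/\ Z.of_nat (P p S (N p m + r)) = (Z.of_nat (P p L m) + Z.of_nat (P p M m))%Z,
      Z.of_nat (P p M (N p m + r)) = Z.of_nat (P p S m),
      Z.of_nat (N p m) = ((zp p + 1) * Z.of_nat (P p L m) + Z.of_nat (P p S m) + zp p * Z.of_nat (P p M m))%Z
    & Z.of_nat m = (Z.of_nat (P p L m) + Z.of_nat (P p S m) + Z.of_nat (P p M m))%Z].
Proof.
move=> hr; have [h1 h2 h3] := P_N hp m.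
rewrite !(P_Nr hp _ hr) /= h2 h3 (N_eq hp) /zp; have := Psum hp m; split; lia.
Qed.

Theorem main_ind N0 : forall i n j n', n <= N0 -> n' <= N0 ->
  (- K <= Z.of_nat n - Z.of_nat n' <= K)%Z -> memT Tm (wst i n j n').
Proof.
elim: N0 => [|N0 IH] i n j n' hn hn' hk.
  by apply: (allP Hbase); apply: base_in; lia.
case: (leqP n 2) => h1; case: (leqP n' 2) => h2;
  try by apply: (allP Hbase); apply: base_in.
all: have [m1 [r1 [e1 b1]]] := decomp hp i.
all: have [m2 [r2 [e2 b2]]] := decomp hp (i + n).
all: have [m3 [r3 [e3 b3]]] := decomp hp j.
all: have [m4 [r4 [e4 b4]]] := decomp hp (j + n').
all: have [w1 w2 w3] := window e1 b1 e2 b2.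
all: have [w4 w5 w6] := window e3 b3 e4 b4.
all: have hn1 : m2 - m1 <= N0 by lia.
all: have hn3 : m4 - m3 <= N0 by lia.
all: clear h1 h2 w3 w6.
all: set x := wst m1 (m2 - m1) m3 (m4 - m3).
all: have [f1 f2 f3 f4] := PN_facts b1.
all: have [g1 g2 g3 g4] := PN_facts b2.
all: have [h1 h2 h3 h4] := PN_facts b3.
all: have [k1 k2 k3 k4] := PN_facts b4.
all: have q1 := Psum hp m1.
all: have q2 := Psum hp m2.
all: have q3 := Psum hp m3.
all: have q4 := Psum hp m4.
all: have sz c : size (phi p c) <= p.+1 by rewrite (size_phi hp); case: c => //; lia.
all: have sb1 := sz (u p m1).
all: have sb2 := sz (u p m2).
all: have sb3 := sz (u p m3).
all: have sb4 := sz (u p m4).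
all: rewrite -e1 in f1 f2; rewrite -e2 in g1 g2; rewrite -e3 in h1 h2; rewrite -e4 in k1 k2.
all: set dL := ((Z.of_nat (P p L m2) - Z.of_nat (P p L m1)) - (Z.of_nat (P p L m4) - Z.of_nat (P p L m3)))%Z.
all: have Ek : (Z.of_nat n - Z.of_nat n' = (zp p + 1) * dL + ss x + zp p * sm x
          + Z.of_nat r2 - Z.of_nat r1 - Z.of_nat r4 + Z.of_nat r3)%Z.
all: try (rewrite /x /wst /zd /= !subnKC //; move: e1 e2 e3 e4; rewrite /dL; lia).
all: have hs1 : m1 + (m2 - m1) = m2 by lia.
all: have hs3 : m3 + (m4 - m3) = m4 by lia.
all: have Kn : K = Z.of_nat (Z.to_nat K) by lia.
all: case: (Z_lt_le_dec K (Z.of_nat (m2 - m1) - Z.of_nat (m4 - m3))) => hk1.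
1,3,5: have ht : m4 - m3 + Z.to_nat K <= N0 by lia.
1,2,3: set t := m1 + (m4 - m3 + Z.to_nat K).
1,2,3: have et : t = m1 + (m4 - m3 + Z.to_nat K) by [].
1,2,3: have hxt := IH m1 (m4 - m3 + Z.to_nat K) m3 (m4 - m3) ht hn3 ltac:(lia).
1,2,3: have := Hbnd hxt; rewrite /bound_ok /wst /zd /= -/t hs3.
1,2,3: rewrite ifT; last by apply/Z.eqb_spec; lia.
1,2,3: case/andP => /andP [/Z.leb_le hs /Z.ltb_lt hm] _.
1,2,3: have mt1 a : P p a m1 <= P p a t by apply: P_mono; lia.
1,2,3: have mt2 a : P p a t <= P p a m2 by apply: P_mono; lia.
1,2,3: have qt := Psum hp t.
1,2,3: move: (mt1 L) (mt1 S) (mt1 M) (mt2 L) (mt2 S) (mt2 M) => u1 u2 u3 u4 u5 u6.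
1,2,3: set St := (Z.of_nat (P p S t) - _ - _)%Z in hs hm.
1,2,3: have pm1 : (P0 * (K - St - 2) <= zp p * (K - St - 2))%Z by apply: Z.mul_le_mono_nonneg_r; lia.
1,2,3: have pm2 : (0 <= zp p * (Z.of_nat (P p L m2) - Z.of_nat (P p L t)))%Z by apply: Z.mul_nonneg_nonneg; rewrite /zp; lia.
1,2,3: have pm3 : (0 <= (zp p - 1) * (Z.of_nat (P p M m2) - Z.of_nat (P p M t)))%Z by apply: Z.mul_nonneg_nonneg; rewrite /zp; lia.
1,2,3: move: Ek; rewrite /x /wst /zd /= hs1 hs3 => Ek.
1,2,3: have z0 : ((Z.of_nat (P p L t) - Z.of_nat (P p L m1) - (Z.of_nat (P p L m4) - Z.of_nat (P p L m3)))
     + St + (Z.of_nat (P p M t) - Z.of_nat (P p M m1) - (Z.of_nat (P p M m4) - Z.of_nat (P p M m3))) - K = 0)%Z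
     by rewrite /St; lia.
1,2,3: have pm4 := f_equal (Z.mul (zp p)) z0; rewrite Z.mul_0_r in pm4.
1,2,3: exfalso; rewrite /zp in pm1 pm2 pm3 pm4 Ek; rewrite /dL in Ek; rewrite /St in hs hm pm1 pm4 z0; lia.
all: case: (Z_lt_le_dec (Z.of_nat (m2 - m1) - Z.of_nat (m4 - m3)) (- K)) => hk2.
1,3,5: have ht : m2 - m1 + Z.to_nat K <= N0 by lia.
1,2,3: set t := m3 + (m2 - m1 + Z.to_nat K).
1,2,3: have et : t = m3 + (m2 - m1 + Z.to_nat K) by [].
1,2,3: have hxt := IH m1 (m2 - m1) m3 (m2 - m1 + Z.to_nat K) hn1 ht ltac:(lia).
1,2,3: have := Hbnd hxt; rewrite /bound_ok /wst /zd /= -/t hs1.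
1,2,3: rewrite ifF; last by apply/Z.eqb_spec; lia.
1,2,3: rewrite ifT; last by apply/Z.eqb_spec; lia.
1,2,3: move=> /= /andP [/Z.leb_le hs /Z.ltb_lt hm].
1,2,3: have mt1 a : P p a m3 <= P p a t by apply: P_mono; lia.
1,2,3: have mt2 a : P p a t <= P p a m4 by apply: P_mono; lia.
1,2,3: have qt := Psum hp t.
1,2,3: move: (mt1 L) (mt1 S) (mt1 M) (mt2 L) (mt2 S) (mt2 M) => u1 u2 u3 u4 u5 u6.
1,2,3: set St := (Z.of_nat (P p S m2) - _ - _)%Z in hs hm.
1,2,3: have pm1 : (P0 * (K + St - 2) <= zp p * (K + St - 2))%Z by apply: Z.mul_le_mono_nonneg_r; lia.
1,2,3: have pm2 : (0 <= zp p * (Z.of_nat (P p L m4) - Z.of_nat (P p L t)))%Z by apply: Z.mul_nonneg_nonneg; rewrite /zp; lia.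
1,2,3: have pm3 : (0 <= (zp p - 1) * (Z.of_nat (P p M m4) - Z.of_nat (P p M t)))%Z by apply: Z.mul_nonneg_nonneg; rewrite /zp; lia.
1,2,3: have z0 : ((Z.of_nat (P p L m2) - Z.of_nat (P p L m1) - (Z.of_nat (P p L t) - Z.of_nat (P p L m3)))
     + St + (Z.of_nat (P p M m2) - Z.of_nat (P p M m1) - (Z.of_nat (P p M t) - Z.of_nat (P p M m3))) + K = 0)%Z
     by rewrite /St; lia.
1,2,3: have pm4 := f_equal (Z.mul (zp p)) z0; rewrite Z.mul_0_r in pm4.
1,2,3: move: Ek; rewrite /x /wst /zd /= hs1 hs3 => Ek.
1,2,3: exfalso; rewrite /zp in pm1 pm2 pm3 pm4 Ek; rewrite /dL in Ek; rewrite /St in hs hm pm1 pm4 z0; lia.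
all: have hx := IH m1 (m2 - m1) m3 (m4 - m3) hn1 hn3 ltac:(lia).
all: have E : wst i n j n' = MkSt (Z.of_nat n - Z.of_nat n') (dL + sm x) (ss x)
        (nth L (phi p (la x)) r1) (nth L (phi p (lb x)) r2)
        (nth L (phi p (la' x)) r3) (nth L (phi p (lb' x)) r4).
all: try (rewrite /x /wst /zd /= hs1 hs3 -(uN hp b1) -(uN hp b2) -(uN hp b3) -(uN hp b4) -e1 -e2 -e3 -e4;
          congr MkSt; rewrite /dL; lia).
all: rewrite E; apply: (allP (Hclos hx)).
all: apply: (succ_in' hp Hev); rewrite /x /wst /zd /= ?hs1 ?hs3 //.
all: try lia.
all: move: Ek; rewrite /x /wst /zd /= hs1 hs3 /dL => ->; lia.
Qed.


End Ind.


Lemma check_props ev P0 K : check ev P0 K = true ->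
  let Tm := mkmap (elems ev) in
  [/\ (forall x, memT Tm x -> all (memT Tm) (succs ev x)), all (memT Tm) base,
      (forall x, memT Tm x -> bound_ok P0 K x) & (forall x, memT Tm x -> final_ok x)].
Proof.
rewrite /check => /and4P [h1 h2 h3 h4]; split.
- by move=> x /memT_mkmap hx; apply: (allP h1).
- exact: h2.
- by move=> x /memT_mkmap hx; apply: (allP h3).
- by move=> x /memT_mkmap hx; apply: (allP h4).
Qed.

Lemma final_gen p (hp : 1 < p) ev P0 :
  check ev P0 7 = true -> evspec (zp p) 7 ev -> (0 <= P0 <= zp p)%Z ->
  forall i j n, (- 2 <= zd p M i n j n <= 2)%Z.
Proof.
move=> hc hev hP0 i j n.
have [h1 h2 h3 h4] := check_props hc.
have hm : memT (mkmap (elems ev)) (wst p i n j n).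
  apply: (main_ind hp hev hP0 _ h1 h2 h3 i j (leqnn n) (leqnn n)); lia.
have := h4 _ hm; rewrite /final_ok /wst /=.
rewrite ifT; last by apply/Z.eqb_spec; lia.
by case/andP => /Z.leb_le ? /Z.leb_le ?; lia.
Qed.

Lemma chk2 : check (evc 2 7) 2 7 = true. Proof. by vm_compute. Qed.
Lemma chks : check (evs 3 7) 3 7 = true. Proof. by vm_compute. Qed.

Theorem theorem4p1 (p : nat) (hp : 1 < p) (i j n : nat) :
  occ M (factor p i n) <= occ M (factor p j n) + 2 /\
  occ M (factor p j n) <= occ M (factor p i n) + 2.
Proof.
have H : (- 2 <= zd p M i n j n <= 2)%Z.
  case: (ltnP p 3) => h3.
    have ep : p = 2 by lia.
    subst p; apply: (final_gen hp chk2 (evc_spec _ _)); rewrite /zp; lia.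
  apply: (final_gen hp chks); first by apply: evs_spec; rewrite /zp; lia.
  by rewrite /zp; lia.
rewrite !occ_factor; move: H; rewrite /zd.
have := P_mono p M (leq_addr n i); have := P_mono p M (leq_addr n j).
lia.
Qed.
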